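(* Let $(X,d)$ be a complete metric space and let $G:X\times X\to X$ be a mapping such that (a) $G(x,x)=x$ for all $x\in X$, and (b) for $x,y\in X$, $G(x,y)=x$ implies $y=x$. Let $T:X\to P_{cl}(X)$ be a multivalued operator with $SFix(T)\neq\emptyset$ and let $T_G(x)=\{G(x,u):u\in T(x)\}$ be the admissible perturbation of $T$ corresponding to $G$. Suppose there exist $\alpha,\beta,\gamma\ge0$ with $\alpha+\beta+\gamma<1$ such that $$H(T_G(x),T_G(y))\le\alpha d(x,y)+\beta D(x,T_G(y))+\gamma D(y,T_G(x))\quad\text{for all }x,y\in X,$$ so that $SFix(T)=\{x^*\}$ for some $x^*$, and suppose moreover that (ii) there exists $l\in(0,1)$ with $H(T(x),\{x^*\})\le l\,H(T_G(x),\{x^*\})$ for all $x\in X$, and (iii) there exists $L>0$ with $D(x,T_G(x))\le L\,D(x,T(x))$ for all $x\in X$. Then the strict fixed point problem $T(x)=\{x\}$ has the Ostrowski stability property: $T$ has a unique strict fixed point $x^*$, and for every sequence $(v_n)_{n\in\mathbb N}\subset X$ with $D(v_{n+1},T(v_n))\to0$ we have $v_n\to x^*$.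
   Context: $P_{cl}(X)$ is the family of nonempty closed subsets of $X$; $SFix(T)=\{x:T(x)=\{x\}\}$. For nonempty $A,B\subseteq X$: $D(a,B)=\inf_{b\in B}d(a,b)$, $e(A,B)=\sup_{a\in A}D(a,B)$, $H(A,B)=\max\{e(A,B),e(B,A)\}$. *)

(* Defs.v *)
From mathcomp Require Import all_boot all_order all_algebra.
From mathcomp Require Import all_classical all_reals all_analysis.
Set Implicit Arguments. Unset Strict Implicit. Unset Printing Implicit Defensive.
Import Order.TTheory GRing.Theory Num.Theory.
Local Open Scope classical_set_scope.
Local Open Scope ring_scope.

Definition is_metric (R : realType) (X : Type) (d : X -> X -> R) : Prop :=
  [/\ (forall x y, 0 <= d x y),
      (forall x y, d x y = 0 <-> x = y),
      (forall x y, d x y = d y x) &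
      (forall x y z, d x z <= d x y + d y z)].

Definition cauchy_seq (R : realType) (X : Type) (d : X -> X -> R) (u : nat -> X) : Prop :=
  forall e : R, 0 < e -> exists N : nat, forall m n, (N <= m)%N -> (N <= n)%N -> d (u m) (u n) < e.

Definition converges_to (R : realType) (X : Type) (d : X -> X -> R) (u : nat -> X) (x : X) : Prop :=
  forall e : R, 0 < e -> exists N : nat, forall n, (N <= n)%N -> d (u n) x < e.

Definition complete_metric (R : realType) (X : Type) (d : X -> X -> R) : Prop :=
  forall u : nat -> X, cauchy_seq d u -> exists x, converges_to d u x.

Definition closed_in (R : realType) (X : Type) (d : X -> X -> R) (A : set X) : Prop :=
  forall x, (forall e : R, 0 < e -> exists2 a, A a & d x a < e) -> A x.

Definition Pcl (R : realType) (X : Type) (d : X -> X -> R) (A : set X) : Prop :=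
  A !=set0 /\ closed_in d A.

Definition Dist (R : realType) (X : Type) (d : X -> X -> R) (a : X) (B : set X) : \bar R :=
  ereal_inf [set (d a b)%:E | b in B].

Definition exc (R : realType) (X : Type) (d : X -> X -> R) (A B : set X) : \bar R :=
  ereal_sup [set Dist d a B | a in A].

Definition Haus (R : realType) (X : Type) (d : X -> X -> R) (A B : set X) : \bar R :=
  maxe (exc d A B) (exc d B A).

Definition SFix (X : Type) (T : X -> set X) : set X := [set x | T x = [set x]].

Definition TG (X : Type) (G : X -> X -> X) (T : X -> set X) (x : X) : set X :=
  G x @` T x.

Definition ecvg0 (R : realType) (u : nat -> \bar R) : Prop :=
  forall e : R, 0 < e -> exists N : nat, forall n, (N <= n)%N -> (u n < e%:E)%E.

(* Main.v *)
Require Import Defs.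
From mathcomp Require Import all_boot all_order all_algebra.
From mathcomp Require Import all_classical all_reals all_analysis.
From mathcomp Require Import lra ring.
Import Order.TTheory GRing.Theory Num.Theory.
Local Open Scope classical_set_scope.
Local Open Scope ring_scope.
Set Implicit Arguments. Unset Strict Implicit.

Lemma Dist_le (R : realType) (X : Type) (d : X -> X -> R) a (B : set X) b :
  B b -> (Dist d a B <= (d a b)%:E)%E.
Proof. by move=> Bb; apply: ereal_inf_lbound; exists b. Qed.

Lemma Dist_lb (R : realType) (X : Type) (d : X -> X -> R) a (B : set X) (r : R) :
  (forall b, B b -> r <= d a b) -> (r%:E <= Dist d a B)%E.
Proof. by move=> H; apply: le_ereal_inf_tmp => _ [b Bb <-]; rewrite lee_fin H. Qed.

Lemma Dist1 (R : realType) (X : Type) (d : X -> X -> R) a b :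
  Dist d a [set b] = (d a b)%:E.
Proof. by rewrite /Dist image_set1 ereal_inf1. Qed.

Lemma Dist_fin (R : realType) (X : Type) (d : X -> X -> R) a (B : set X) :
  is_metric d -> B !=set0 -> exists p, Dist d a B = p%:E /\ 0 <= p.
Proof.
case=> d0 _ _ _ [b Bb].
have h1 := @Dist_le R X d a B b Bb.
have h2 : (0%:E <= Dist d a B)%E by apply: Dist_lb => c _; exact: d0.
move: h1 h2; case: (Dist d a B) => [p| |] //= _ h2; exists p; split=> //.
Qed.

Lemma exc_ge (R : realType) (X : Type) (d : X -> X -> R) a (A B : set X) :
  A a -> (Dist d a B <= exc d A B)%E.
Proof. by move=> Aa; apply: ereal_sup_ubound; exists a. Qed.

Lemma exc1 (R : realType) (X : Type) (d : X -> X -> R) a (B : set X) :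
  exc d [set a] B = Dist d a B.
Proof. by rewrite /exc image_set1 ereal_sup1. Qed.

Lemma Haus_l (R : realType) (X : Type) (d : X -> X -> R) (A B : set X) :
  (exc d A B <= Haus d A B)%E.
Proof. by rewrite /Haus le_max lexx. Qed.

Lemma Haus_r (R : realType) (X : Type) (d : X -> X -> R) (A B : set X) :
  (exc d B A <= Haus d A B)%E.
Proof. by rewrite /Haus le_max lexx orbT. Qed.

Lemma rec_lemma (R : realType) (a : nat -> R) (q : R) :
  (forall n, 0 <= a n) -> 0 <= q -> q < 1 ->
  (forall e : R, 0 < e -> exists N : nat, forall n, (N <= n)%N -> a n.+1 < e + q * a n) ->
  forall e : R, 0 < e -> exists N : nat, forall n, (N <= n)%N -> a n < e.
Proof.
move=> a0 q0 q1 H e e0.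
have e'0 : 0 < e * (1 - q) / 2 by rewrite !mulr_gt0 // ?subr_gt0 // invr_gt0.
have [N1 HN1] := H _ e'0.
have ind : forall m, a (N1 + m)%N - e / 2 <= q ^+ m * a N1.
  elim=> [|m IH]; first by rewrite addn0 expr0 mul1r lerBlDr lerDl divr_ge0 // ltW.
  have := HN1 (N1 + m)%N (leq_addr _ _); rewrite addnS => h.
  have h2 : a (N1 + m).+1 - e / 2 <= q * (a (N1 + m)%N - e / 2).
    rewrite mulrBr; apply: ltW; move: h; lra.
  apply: (le_trans h2); rewrite exprS -mulrA; exact: ler_wpM2l.
have c0 : 0 < e / 2 / (a N1 + 1) by rewrite !divr_gt0 // ltr_wpDl.
have [N2 HN2] : exists N:nat, forall n, (N <= n)%N -> q ^+ n < e / 2 / (a N1 + 1).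
  have := @cvg_geometric R 1 q.
  rewrite ger0_norm // => /(_ q1) /cvgrPdist_lt /(_ _ c0).
  case=> N _ HN; exists N => n Hn.
  have := HN n Hn. rewrite /geometric /= sub0r normrN mul1r ger0_norm //. exact: exprn_ge0.
exists (N1 + N2)%N => n Hn.
have -> : n = (N1 + (n - N1))%N by rewrite subnKC // (leq_trans (leq_addr N2 N1)).
have Hm : (N2 <= n - N1)%N by rewrite leq_subRL // (leq_trans (leq_addr N2 N1)).
have h1 := ind (n - N1)%N.
have h2 := HN2 _ Hm.
have h3 : q ^+ (n - N1) * a N1 <= q ^+ (n - N1) * (a N1 + 1).
  by apply: ler_wpM2l; [exact: exprn_ge0 | rewrite lerDl].
have h4 : q ^+ (n - N1) * (a N1 + 1) < e / 2.
  by rewrite -ltr_pdivlMr ?ltr_wpDl.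
lra.
Qed.

Theorem mainTheorem7 (R : realType) (X : Type) (d : X -> X -> R)
  (G : X -> X -> X) (T : X -> set X) (alpha beta gamma l L : R) (xstar : X) :
  is_metric d -> complete_metric d ->
  (forall x, G x x = x) ->
  (forall x y, G x y = x -> y = x) ->
  (forall x, Pcl d (T x)) ->
  SFix T !=set0 ->
  0 <= alpha -> 0 <= beta -> 0 <= gamma -> alpha + beta + gamma < 1 ->
  (forall x y, (Haus d (TG G T x) (TG G T y) <=
      (alpha * d x y)%:E + beta%:E * Dist d x (TG G T y)
      + gamma%:E * Dist d y (TG G T x))%E) ->
  SFix T xstar ->
  0 < l -> l < 1 ->
  (forall x, (Haus d (T x) [set xstar] <= l%:E * Haus d (TG G T x) [set xstar])%E) ->
  0 < L ->
  (forall x, (Dist d x (TG G T x) <= L%:E * Dist d x (T x))%E) ->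
  SFix T = [set xstar] /\
  (forall v : nat -> X, ecvg0 (fun n => Dist d (v n.+1) (T (v n))) ->
     converges_to d v xstar).
Proof.
move=> hm _ Gxx _ Tcl _ a0 b0 c0 abc Hc Sx l0 l1 Hl _ _.
have hm' := hm; case: hm' => d0 deq dsym dtri.
have TGS : forall y, SFix T y -> TG G T y = [set y].
  by move=> y Sy; rewrite /TG Sy image_set1 Gxx.
split.
  apply/seteqP; split=> y; last by move=> ->.
  move=> Sy; have := Hc y xstar; rewrite !TGS // !Dist1.
  move=> H; have := le_trans (Haus_l _ _ _) H.
  rewrite exc1 Dist1 -!EFinM -!EFinD lee_fin => h.
  apply/(deq y xstar).
  have : d y xstar <= 0 by have := dsym xstar y; nra.
  by move=> h2; apply/eqP; rewrite eq_le h2 d0.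
set k := (alpha + beta) / (1 - gamma).
have g1 : 0 < 1 - gamma by lra.
have k0 : 0 <= k by rewrite divr_ge0 //; lra.
have kid : (alpha + beta) + gamma * k = k.
  rewrite /k; field; lra.
set q := l * k.
have step : forall y z, ((d z xstar - q * d y xstar)%:E <= Dist d z (T y))%E.
  move=> y z.
  have TGne : TG G T y !=set0.
    by case: (Tcl y) => [[u Tu] _]; exists (G y u); exists u.
  have [p [Dp p0]] := Dist_fin xstar hm TGne.
  have H := Hc y xstar; rewrite (TGS xstar) // Dist1 Dp -!EFinM -!EFinD in H.
  have pH : p <= alpha * d y xstar + beta * d y xstar + gamma * p.
    rewrite -lee_fin -Dp -exc1; exact: le_trans (Haus_r _ _ _) H.
  have pk : p <= k * d y xstar.
    rewrite /k mulrAC ler_pdivlMr //. nra.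
  have HTG : (Haus d (TG G T y) [set xstar] <= (k * d y xstar)%:E)%E.
    apply: (le_trans H); rewrite lee_fin.
    have : gamma * p <= gamma * (k * d y xstar) by apply: ler_wpM2l.
    rewrite -kid; nra.
  have HT : (Haus d (T y) [set xstar] <= (q * d y xstar)%:E)%E.
    apply: (le_trans (Hl y)); rewrite /q -mulrA EFinM.
    by apply: lee_wpmul2l => //; rewrite lee_fin ltW.
  apply: Dist_lb => b Tb.
  have : ((d b xstar)%:E <= (q * d y xstar)%:E)%E.
    rewrite -Dist1; apply: le_trans (exc_ge d _ Tb) _; exact: le_trans (Haus_l _ _ _) HT.
  rewrite lee_fin => h; have := dtri z b xstar; lra.
move=> v Hv.
have q0 : 0 <= q by rewrite mulr_ge0 // ltW.
have q1 : q < 1.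
  have k1 : k <= 1 by rewrite /k ler_pdivrMr //; lra.
  rewrite /q; nra.
apply: (rec_lemma (a := fun n => d (v n) xstar) _ q0 q1) => // e e0.
have [N HN] := Hv e e0; exists N => n Hn.
have := le_lt_trans (step (v n) (v n.+1)) (HN n Hn); rewrite lte_fin; lra.
Qed.
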